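(* Let $q$ be an odd prime power, let $n,k$ be positive integers, and let $a,b,\delta\in\mathbb{F}_{q^n}$ with $ab\neq0$. Then $$f(x)=(ax^{q^k}-bx+\delta)^{\frac{q^n+1}{2}}+ax^{q^k}+bx$$ is a permutation polynomial of $\mathbb{F}_{q^n}$ if and only if $ab\in D_0$.
   Context: Let $\alpha$ be a primitive element of $\mathbb{F}_{q^n}$; $D_0=\langle\alpha^2\rangle$ is the multiplicative subgroup generated by $\alpha^2$, i.e. the set of nonzero squares in $\mathbb{F}_{q^n}$. A permutation polynomial of $\mathbb{F}_{q^n}$ is one inducing a bijection of $\mathbb{F}_{q^n}$. *)

(* Defs.v *)
From HB Require Import structures.
From mathcomp Require Import all_boot all_order all_algebra all_field.
Set Implicit Arguments. Unset Strict Implicit. Unset Printing Implicit Defensive.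
Import GRing.Theory.
Local Open Scope ring_scope.

Definition prime_power (q : nat) : Prop :=
  exists p m : nat, [/\ prime p, (0 < m)%N & q = (p ^ m)%N].

(* D_0 : the set of nonzero squares of the finite field F (= <alpha^2>) *)
Definition D0 (F : finFieldType) : {set F} :=
  [set x : F | [exists y : F, (y != 0) && (x == y ^+ 2)]].

Definition fpoly (F : finFieldType) (q n k : nat) (a b delta : F) (x : F) : F :=
  (a * x ^+ (q ^ k) - b * x + delta) ^+ ((q ^ n + 1) %/ 2) + a * x ^+ (q ^ k) + b * x.

Definition is_perm_fun (F : finFieldType) (f : F -> F) : Prop := bijective f.

(* Main.v *)
Require Import Defs.
From HB Require Import structures.
From mathcomp Require Import all_boot all_order all_algebra all_field all_solvable ring.
Import GRing.Theory.
Set Implicit Arguments. Unset Strict Implicit.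
Local Open Scope ring_scope.


Lemma expQ1 (F : finFieldType) (c : F) : c != 0 -> c ^+ #|F|.-1 = 1.
Proof.
move=> c0; apply: (mulfI c0); rewrite mulr1 -exprS prednK ?expf_card //.
by apply/card_gt0P; exists 0.
Qed.

Lemma euler (F : finFieldType) (h : nat) (hQ : #|F| = (h.*2).+1) (h0 : (0 < h)%N)
  (c : F) : c != 0 -> (forall y : F, y != 0 -> c != y ^+ 2) -> c ^+ h = -1.
Proof.
move=> c0 nsq.
have pQ : #|F|.-1 = h.*2 by rewrite hQ.
have /hasP[g _ pg] : has (#|F|.-1).-primitive_root (enum (predC1 (0:F))).
  apply: has_prim_root.
  - by rewrite pQ double_gt0.
  - apply/allP=> x; rewrite mem_enum inE => x0; apply/unity_rootP; exact: expQ1.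
  - exact: enum_uniq.
  - by rewrite -cardE cardC1.
have [i ci] := prim_rootP pg (expQ1 c0).
have : (c ^+ h) ^+ 2 = 1 by rewrite -exprM muln2 -pQ expQ1.
move/eqP; rewrite sqrf_eq1 => /orP[/eqP e1|/eqP //].
have : (#|F|.-1 %| i * h)%N by rewrite (prim_order_dvd pg) exprM -ci e1.
move: (nat_of_ord i) ci => {}i ci.
rewrite pQ -mul2n dvdn_pmul2r // => /dvdnP[j ij].
have g0 : g != 0.
  apply/eqP => g0; move: (prim_expr_order pg); rewrite g0 expr0n pQ -mul2n muln_eq0 /=.
  by rewrite eqn0Ngt h0 /= => /eqP; rewrite eq_sym oner_eq0.
have := nsq (g ^+ j); rewrite expf_eq0 (negbTE g0) andbF => /(_ isT).
by rewrite ci ij -exprM mulnC eqxx.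
Qed.

Theorem mainTheorem11 (F : finFieldType) (q n k : nat)
  (hq : prime_power q) (hodd : odd q) (hn : (0 < n)%N) (hk : (0 < k)%N)
  (hF : #|F| = (q ^ n)%N) (a b delta : F) (hab : a * b != 0) :
  is_perm_fun (fpoly q n k a b delta) <-> a * b \in D0 F.
Proof.
have [p [m [pp m0 qE]]] := hq.
have pF : p \in [pchar F] by apply: (@card_finPcharP _ _ (m * n)); rewrite // hF qE expnM.
have p2 : p != 2%N by apply: contraTneq hodd => p2; rewrite qE p2 oddX orbF eqn0Ngt m0.
have two0 : (2 : F) != 0.
  apply: contra p2 => /eqP t0; rewrite -(dvdn_prime2 pp) //.
  by rewrite (dvdn_pcharf pF); apply/eqP.
set N := (q ^ k)%N.
have addN (x y : F) : (x + y) ^+ N = x ^+ N + y ^+ N.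
  apply: exprDn_pchar; rewrite (eq_pnat _ (pcharf_eq pF)) /N qE -expnM pnatX.
  by rewrite pnat_id.
have subN (x y : F) : (x - y) ^+ N = x ^+ N - y ^+ N.
  by apply/eqP; rewrite eq_sym subr_eq -addN subrK.
have injN (x y : F) : x ^+ N = y ^+ N -> x = y.
  move=> /eqP; rewrite -subr_eq0 -subN expf_eq0 subr_eq0 => /andP[_ /eqP //].
have oddN : odd N by rewrite /N oddX hodd orbT.
have [h hQ] : exists h, #|F| = h.*2.+1.
  by exists (#|F|./2); rewrite -[LHS]odd_double_half hF oddX hodd orbT add1n.
have h0 : (0 < h)%N.
  have : (1 < #|F|)%N by apply/card_gt1P; exists 0; exists 1; split; rewrite ?inE 1?eq_sym ?oner_eq0.
  by rewrite hQ; case: h {hQ}.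
have hE : ((q ^ n + 1) %/ 2 = h.+1)%N by rewrite -hF hQ addn1 -doubleS -muln2 mulnK.
have fE x : fpoly q n k a b delta x =
    (a * x ^+ N - b * x + delta) * (a * x ^+ N - b * x + delta) ^+ h + a * x ^+ N + b * x.
  by rewrite /fpoly hE exprS.
have sgn (u : F) : u * u ^+ h = u \/ u * u ^+ h = - u.
  have [->|u0] := eqVneq u 0; first by left; rewrite mul0r.
  have : (u ^+ h) ^+ 2 = 1 by rewrite -exprM muln2 -[h.*2]/(h.*2.+1.-1) -hQ expQ1.
  by move/eqP; rewrite sqrf_eq1 => /orP[]/eqP->; [left; rewrite mulr1|right; rewrite mulrN1].
have nsqe (c : F) (y : F) : y != 0 -> c = y ^+ 2 -> c ^+ h = 1.
  by move=> y0 ->; rewrite -exprM mul2n -[h.*2]/(h.*2.+1.-1) -hQ expQ1.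
have [r rE] : exists r, N = r.*2.+1.
  by exists N./2; rewrite -[LHS]odd_double_half oddN add1n.
have mixed (x y : F) :
    (a * x ^+ N - b * x + delta) * (a * x ^+ N - b * x + delta) ^+ h = (a * x ^+ N - b * x + delta) ->
    (a * y ^+ N - b * y + delta) * (a * y ^+ N - b * y + delta) ^+ h = - (a * y ^+ N - b * y + delta) ->
    fpoly q n k a b delta x = fpoly q n k a b delta y -> x != y -> (a * b) ^+ h = -1.
  move=> Pu Qv; rewrite !fE Pu Qv => fxy xy.
  have K : a * x ^+ N - b * y + delta = 0.
    have : 2 * (a * x ^+ N - b * y + delta) = 0.
      by move/eqP: fxy; rewrite -subr_eq0 => /eqP <-; ring.
    by move/eqP; rewrite mulf_eq0 (negbTE two0) => /eqP.
  have uE : a * x ^+ N - b * x + delta = b * (y - x).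
    by rewrite -[LHS]subr0 -K; ring.
  have vE : a * y ^+ N - b * y + delta = a * (y - x) ^+ N.
    by rewrite subN -[LHS]subr0 -K; ring.
  have d0 : y - x != 0 by rewrite subr_eq0 eq_sym.
  have a0 : a != 0 by apply: contraNneq hab => ->; rewrite mul0r.
  have b0 : b != 0 by apply: contraNneq hab => ->; rewrite mulr0.
  rewrite uE in Pu; rewrite vE in Qv.
  have e1 : (b * (y - x)) ^+ h = 1.
    by apply: (mulfI (_ : b * (y - x) != 0)); rewrite ?mulr1 // mulf_neq0.
  have e2 : (a * (y - x) ^+ N) ^+ h = -1.
    apply: (mulfI (_ : a * (y - x) ^+ N != 0)); rewrite ?mulrN1 //.
    by rewrite mulf_neq0 // expf_neq0.
  have e3 : (a * b * ((y - x) ^+ r.+1) ^+ 2) ^+ h = (a * b) ^+ h.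
    by rewrite exprMn (nsqe (((y - x) ^+ r.+1) ^+ 2) ((y - x) ^+ r.+1)) ?mulr1 //; exact: expf_neq0.
  rewrite -e3; have -> : a * b * ((y - x) ^+ r.+1) ^+ 2 = (b * (y - x)) * (a * (y - x) ^+ N).
    by rewrite rE -exprM muln2 doubleS !exprS; ring.
  by rewrite exprMn e1 e2 mul1r.
have a0 : a != 0 by apply: contraNneq hab => ->; rewrite mul0r.
have b0 : b != 0 by apply: contraNneq hab => ->; rewrite mulr0.
have m1 : (1 : F) != -1.
  apply: contra two0 => /eqP e; apply/eqP; rewrite -[2]/(1 + 1)%R.
  by rewrite {1}e addNr.
split.
- move=> [g fK gK]; apply/negPn/negP => nD.
  have nsq (y : F) : y != 0 -> a * b != y ^+ 2.
    move=> y0; apply/negP => /eqP abE; apply: (negP nD); rewrite inE.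
    by apply/existsP; exists y; rewrite y0 abE eqxx.
  have eab := euler hQ h0 hab nsq.
  have injM : injective (fun x => a * x ^+ N - b * x).
    move=> x y /= H; apply/eqP; apply: contraT => xy.
    have z0 : x - y != 0 by rewrite subr_eq0.
    have E : a * (x - y) ^+ N - b * (x - y) = 0.
      have -> : a * (x - y) ^+ N - b * (x - y) = (a * x ^+ N - b * x) - (a * y ^+ N - b * y).
        by rewrite subN; ring.
      by rewrite H subrr.
    have : (a * b - (a * (x - y) ^+ r) ^+ 2) * (x - y) = 0.
      have zN : (x - y) ^+ N = (x - y) * ((x - y) ^+ r) ^+ 2 by rewrite rE exprS -muln2 exprM.
      by rewrite -(mulr0 (- a)) -E zN; ring.
    move/eqP; rewrite mulf_eq0 (negbTE z0) orbF subr_eq0 => /eqP abE.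
    by have /negP := nsq _ (mulf_neq0 a0 (expf_neq0 r z0)); rewrite abE eqxx.
  have [Minv _ MK] := injF_bij injM.
  set x := Minv (b * b - delta).
  have Mx : a * x ^+ N - b * x = b * b - delta by rewrite /x (MK (b * b - delta)).
  have uE : a * x ^+ N - b * x + delta = b * b by rewrite Mx subrK.
  have vE : a * (x + b) ^+ N - b * (x + b) + delta = a * b ^+ N.
    rewrite addN; transitivity ((a * x ^+ N - b * x) + delta + a * b ^+ N - b * b); first by ring.
    by rewrite Mx; ring.
  have ev : (a * b ^+ N) ^+ h = -1.
    have -> : a * b ^+ N = a * b * (b ^+ r) ^+ 2 by rewrite rE exprS -muln2 exprM; ring.
    rewrite exprMn eab (nsqe ((b ^+ r) ^+ 2) (b ^+ r)) ?mulr1 //; exact: expf_neq0.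
  have eu : (b * b) ^+ h = 1 by rewrite (nsqe (b * b) b) // expr2.
  have fxy : fpoly q n k a b delta x = fpoly q n k a b delta (x + b).
    rewrite !fE uE vE eu ev addN; ring.
  have := congr1 g fxy; rewrite !fK => /eqP; rewrite -subr_eq0 opprD addrA subrr sub0r oppr_eq0.
  by rewrite (negbTE b0).
- rewrite inE => /existsP[s /andP[s0 /eqP abE]].
  have eab : (a * b) ^+ h = 1 by apply: (nsqe _ s).
  apply: injF_bij => x y fxy.
  have [Pu|Qu] := sgn (a * x ^+ N - b * x + delta); have [Pv|Qv] := sgn (a * y ^+ N - b * y + delta).
  + move: fxy; rewrite !fE Pu Pv => fxy; apply: injN.
    have : 2 * a * (x ^+ N - y ^+ N) = 0.
      by move/eqP: fxy; rewrite -subr_eq0 => /eqP <-; ring.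
    by move/eqP; rewrite !mulf_eq0 (negbTE two0) (negbTE a0) subr_eq0 => /eqP.
  + have [//|xy] := eqVneq x y.
    by have := mixed x y Pu Qv fxy xy; rewrite eab => e; rewrite -e eqxx in m1.
  + have [//|xy] := eqVneq x y.
    have yx : y != x by rewrite eq_sym.
    by have := mixed y x Pv Qu (esym fxy) yx; rewrite eab => e; rewrite -e eqxx in m1.
  + move: fxy; rewrite !fE Qu Qv => fxy.
    have : 2 * b * (x - y) = 0.
      by move/eqP: fxy; rewrite -subr_eq0 => /eqP <-; ring.
    by move/eqP; rewrite !mulf_eq0 (negbTE two0) (negbTE b0) subr_eq0 => /eqP.
Qed.
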